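(* Let $P=(p_1,\dots,p_l)$ be a distribution on $\{x_1,\dots,x_l\}$ with $p_j\in(0,1)$ for all $j$, and let $\hat P=(\hat p_j)_{j=1}^l$ be the empirical distribution constructed from $T\ge 1$ i.i.d. draws from $P$. Define $\rho_1(p)\coloneqq\sqrt{(1-p)/p}$, $\rho_2(p)\coloneqq\rho_1(p)+\rho_1(1-p)$, $c^{(s)}\coloneqq\sum_{j=1}^l\rho_1(p_j)$, and $\tilde c^{(s)}\coloneqq\max\{\rho_2(p_S): S\subset[l],\,1\le |S|<l\}$ where $p_S\coloneqq\sum_{j\in S}p_j$. Then there exist constants $C^{(s)},\tilde C^{(s)}\ge 0$ depending only on $P$ (not on $T$) such that for every $T\ge1$, $$\tilde c^{(s)}\sqrt{\frac{1}{2\pi T}}-\frac{\tilde C^{(s)}}{T}\;\le\;\mathbb E\big[D_s(\hat P,P)\big]\;\le\; c^{(s)}\sqrt{\frac{1}{2\pi T}}+\frac{C^{(s)}}{T}.$$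
   Context: The separation distance between distributions $P$ and $Q$ on $\{x_1,\dots,x_l\}$ with all $q_j>0$ is $D_s(P,Q)\coloneqq\max_{j\in[l]}(1-p_j/q_j)$; thus $D_s(\hat P,P)=\max_j(1-\hat p_j/p_j)$. The empirical distribution has $\hat p_j=T_j/T$ where $T_j$ is the number of draws equal to $x_j$. *)

(* Defs.v *)
From Stdlib Require Import Reals Lra List Arith.
Import ListNotations.
Open Scope R_scope.

(* Outcomes x_1..x_l are encoded as indices 0..l-1; the distribution P is
   given by p : nat -> R (only p 0 .. p (l-1) are relevant). *)

Definition sumR (xs : list R) : R := fold_right Rplus 0 xs.

Fixpoint all_seqs (l T : nat) : list (list nat) :=
  match T with
  | O => [[]]
  | S T' => flat_map (fun s => map (fun j => j :: s) (seq 0 l)) (all_seqs l T')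
  end.

Definition seq_prob (p : nat -> R) (s : list nat) : R :=
  fold_right (fun j acc => p j * acc) 1 s.

Definition emp (s : list nat) (j : nat) : R :=
  INR (count_occ Nat.eq_dec s j) / INR (length s).

Definition maxn_R (f : nat -> R) (n : nat) : R :=
  fold_right (fun j acc => Rmax (f j) acc) (f 0%nat) (seq 0 n).

Definition sep_dist (l : nat) (p' q : nat -> R) : R :=
  maxn_R (fun j => 1 - p' j / q j) l.

Definition exp_sep (l : nat) (p : nat -> R) (T : nat) : R :=
  sumR (map (fun s => seq_prob p s * sep_dist l (emp s) p) (all_seqs l T)).

Definition rho1 (x : R) : R := sqrt ((1 - x) / x).
Definition rho2 (x : R) : R := rho1 x + rho1 (1 - x).

Definition c_s (l : nat) (p : nat -> R) : R :=
  sumR (map (fun j => rho1 (p j)) (seq 0 l)).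

(* subsets of [l] as boolean masks of length l *)
Fixpoint all_masks (n : nat) : list (list bool) :=
  match n with
  | O => [[]]
  | S n' => flat_map (fun b => [true :: b; false :: b]) (all_masks n')
  end.

Definition mask_card (b : list bool) : nat := count_occ Bool.bool_dec b true.

Definition p_S (l : nat) (p : nat -> R) (b : list bool) : R :=
  sumR (map (fun j => if nth j b false then p j else 0) (seq 0 l)).

(* max { rho2(p_S) : S subset [l], 1 <= |S| < l }; rho2 >= 0 and the index
   set is nonempty when l >= 2, so the base value 0 is harmless. *)
Definition ct_s (l : nat) (p : nat -> R) : R :=
  fold_right (fun b acc => Rmax (rho2 (p_S l p b)) acc) 0
    (filter (fun b => andb (Nat.leb 1 (mask_card b)) (Nat.ltb (mask_card b) l))
       (all_masks l)).

(* Main.v *)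
Require Import Defs.
From Stdlib Require Import Reals Lra Lia Arith List Factorial Classical ZArith.
Import ListNotations.
From Coquelicot Require Import Coquelicot.
Open Scope R_scope.

Lemma g_bound t : 0 < t <= 1/3 -> 0 <= ln (1+t) - ln (1-t) - 2*t <= 9/4 * t^3.
Proof.
  intros Ht.
  set (g := fun x => ln (1+x) - ln (1-x) - 2*x).
  set (g' := fun x => / (1+x) + / (1-x) - 2).
  destruct (MVT_cor2 g g' 0 t) as [c [Hc Hct]]. lra.
  { intros c Hc. apply is_derive_Reals. unfold g, g'. auto_derive.
    - split; [lra|split; [lra|auto]].
    - field. lra. }
  unfold g, g' in Hc. rewrite Rplus_0_r, Rminus_0_r, ln_1 in Hc.
  replace (ln (1+t) - ln (1-t) - 2*t) with ((/ (1 + c) + / (1 - c) - 2) * (t - 0)) by lra.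
  assert (0 < 1 - c^2) by (simpl; nra).
  replace (/ (1 + c) + / (1 - c) - 2) with (2*c^2/(1-c^2)) by (field; split; lra).
  split.
  - apply Rmult_le_pos; [|lra]. apply Rmult_le_pos; [nra|]. left; apply Rinv_0_lt_compat; lra.
  - assert (2*c^2/(1-c^2) <= 9/4 * c^2).
    { apply (Rmult_le_reg_r (1 - c^2)). lra. unfold Rdiv. rewrite Rmult_assoc, Rinv_l by lra.
      assert (c^2 <= 1/9) by (simpl; nra). assert (0 <= c^2) by (simpl; nra). nra. }
    assert (c^2 <= t^2) by (simpl; nra). assert (0 <= c^2) by (simpl; nra).
    replace (t^3) with (t^2 * t) by ring. nra.
Qed.

Definition a (n : nat) : R := ln (INR (fact n)) - (INR n + /2) * ln (INR n) + INR n.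

Lemma INR_fact_pos n : 0 < INR (fact n).
Proof. apply lt_0_INR, lt_O_fact. Qed.

Lemma a_step n : (1 <= n)%nat -> 0 <= a n - a (S n) <= 1 / (INR n * INR (S n)).
Proof.
  intros Hn. assert (Hn' : 1 <= INR n) by (apply (le_INR 1); lia).
  rewrite S_INR.
  assert (E : a n - a (S n) = (INR n + /2) * (ln (INR n + 1) - ln (INR n)) - 1).
  { unfold a. rewrite fact_simpl, mult_INR, ln_mult. rewrite S_INR. ring.
    apply lt_0_INR; lia. apply INR_fact_pos. }
  set (t := / (2 * INR n + 1)).
  assert (Ht : 0 < t <= 1/3). { unfold t. split. apply Rinv_0_lt_compat; lra.
     apply (Rmult_le_reg_r (2*INR n+1)). lra. rewrite Rinv_l by lra. lra. }
  assert (L : ln (INR n + 1) - ln (INR n) = ln (1+t) - ln (1-t)).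
  { assert (E1 : 1 + t = (2*(INR n+1)) / (2*INR n+1)) by (unfold t; field; lra).
    assert (E2 : 1 - t = (2*INR n) / (2*INR n+1)) by (unfold t; field; lra).
    rewrite E1, E2. unfold Rdiv. rewrite !ln_mult, !ln_Rinv by (try apply Rinv_0_lt_compat; lra). ring. }
  rewrite E, L. pose proof (g_bound t Ht) as G.
  assert (Hnt : INR n + /2 = / (2 * t)) by (unfold t; field; lra).
  rewrite Hnt.
  replace (/ (2*t) * (ln (1+t) - ln (1-t)) - 1) with (/ (2*t) * (ln (1+t) - ln (1-t) - 2*t)) by (field; lra).
  assert (0 < /(2*t)) by (apply Rinv_0_lt_compat; lra).
  split. apply Rmult_le_pos; lra.
  apply Rle_trans with (/ (2*t) * (9/4 * t^3)). apply Rmult_le_compat_l; lra.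
  replace (/ (2*t) * (9/4 * t^3)) with (9/8 * t^2) by (field; lra).
  unfold t. replace (9/8 * (/(2*INR n+1))^2) with (9/8 / ((2*INR n+1)^2)) by (field; lra).
  apply Rmult_le_reg_r with (INR n * (INR n + 1) * (2*INR n+1)^2). nra.
  replace (9 / 8 / (2 * INR n + 1) ^ 2 * (INR n * (INR n + 1) * (2 * INR n + 1) ^ 2)) with (9/8 * (INR n * (INR n + 1))) by (field; lra).
  replace (1 / (INR n * (INR n + 1)) * (INR n * (INR n + 1) * (2 * INR n + 1) ^ 2)) with ((2 * INR n + 1) ^ 2) by (field; lra).
  nra.
Qed.

Lemma a_mono n k : (1 <= n)%nat -> 0 <= a n - a (n+k) <= 1/INR n - 1/INR (n+k).
Proof.
  intros Hn. induction k.
  - rewrite Nat.add_0_r. lra.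
  - replace (n + S k)%nat with (S (n+k)) by lia.
    pose proof (a_step (n+k) ltac:(lia)) as [H1 H2].
    assert (1 <= INR (n+k)) by (apply (le_INR 1); lia).
    rewrite S_INR in *.
    replace (1 / (INR (n + k) * (INR (n + k) + 1))) with (1/INR (n+k) - 1/(INR (n+k)+1)) in H2 by (field; lra).
    lra.
Qed.

Definition W (n : nat) : R := RInt (fun x => sin x ^ n) 0 (PI/2).

Lemma sinpow_cont n x : continuous (fun x => sin x ^ n) x.
Proof. apply (@ex_derive_continuous R_AbsRing R_NormedModule). auto_derive. auto. Qed.

Lemma W_ex n : ex_RInt (fun x => sin x ^ n) 0 (PI/2).
Proof. apply (@ex_RInt_continuous R_CompleteNormedModule). intros; apply sinpow_cont. Qed.

Lemma W0 : W 0 = PI/2.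
Proof. unfold W. simpl. rewrite RInt_const. unfold scal; simpl; unfold mult; simpl. ring. Qed.

Lemma W1 : W 1 = 1.
Proof.
  unfold W.
  assert (h1 : forall x, Rmin 0 (PI/2) <= x <= Rmax 0 (PI/2) -> is_derive (fun x => - cos x) x (sin x)).
  { intros x _. auto_derive; auto. ring. }
  assert (h2 : forall x, Rmin 0 (PI/2) <= x <= Rmax 0 (PI/2) -> continuous sin x).
  { intros x _. apply (@ex_derive_continuous R_AbsRing R_NormedModule). auto_derive. auto. }
  assert (H := @is_RInt_derive R_CompleteNormedModule (fun x => - cos x) sin 0 (PI/2) h1 h2).
  rewrite (RInt_ext _ sin). 2:{ intros; simpl; ring. }
  rewrite (@is_RInt_unique R_CompleteNormedModule _ _ _ _ H).
  simpl. rewrite cos_PI2, cos_0. unfold minus, plus, opp; simpl. ring.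
Qed.

Lemma W_rec n : INR (n+2) * W (n+2) = INR (n+1) * W n.
Proof.
  assert (h1 : forall x, Rmin 0 (PI/2) <= x <= Rmax 0 (PI/2) -> is_derive (fun x => cos x * sin x ^ (n+1)) x
      (INR (n+1) * sin x ^ n - INR (n+2) * sin x ^ (n+2))).
  { intros x _. auto_derive; auto.
      rewrite !plus_INR. simpl. replace (n+1)%nat with (S n) by lia. replace (n+2)%nat with (S (S n)) by lia.
      simpl. pose proof (sin2_cos2 x) as Hs. unfold Rsqr in Hs.
      replace (cos x * (1 * cos x * ((INR n + 1) * sin x ^ n))) with ((cos x * cos x) * ((INR n + 1) * sin x ^ n)) by ring. replace (cos x * cos x) with (1 - sin x * sin x) by lra. ring. }
  assert (h2 : forall x, Rmin 0 (PI/2) <= x <= Rmax 0 (PI/2) -> continuous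
      (fun x => INR (n+1) * sin x ^ n - INR (n+2) * sin x ^ (n+2)) x).
  { intros x _. apply (@ex_derive_continuous R_AbsRing R_NormedModule). auto_derive. auto. }
  assert (H := @is_RInt_derive R_CompleteNormedModule _ _ 0 (PI/2) h1 h2).
  apply (@is_RInt_unique R_CompleteNormedModule) in H.
  assert (E: RInt (fun x => INR (n+1) * sin x ^ n - INR (n+2) * sin x ^ (n+2)) 0 (PI/2)
     = INR (n+1) * W n - INR (n+2) * W (n+2)).
  { unfold W.
    rewrite (RInt_ext _ (fun x => minus (scal (INR (n+1)) (sin x ^ n)) (scal (INR (n+2)) (sin x ^ (n+2))))).
    2:{ intros; reflexivity. }
    
    rewrite (@RInt_minus R_CompleteNormedModule).
    
    - rewrite (@RInt_scal R_CompleteNormedModule). 2: apply W_ex.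
      
      rewrite (@RInt_scal R_CompleteNormedModule). 2: apply W_ex.
       reflexivity.
    - apply (@ex_RInt_scal R_CompleteNormedModule), W_ex.
    - apply (@ex_RInt_scal R_CompleteNormedModule), W_ex. }
  rewrite E in H. simpl in H. rewrite cos_PI2, sin_0, pow_i in H by lia.
  unfold minus, plus, opp in H; simpl in H. lra.
Qed.

Lemma W_decr n : W (S n) <= W n.
Proof.
  unfold W. apply RInt_le.
  - pose proof PI_RGT_0; lra.
  - apply W_ex. - apply W_ex.
  - intros x Hx. simpl.
    assert (0 <= sin x). { apply sin_ge_0; pose proof PI_RGT_0; lra. }
    assert (sin x <= 1) by apply SIN_bound.
    assert (0 <= sin x ^ n) by (apply pow_le; auto).
    nra.
Qed.

Fixpoint cw (k : nat) : R := match k with O => 1 | S k' => cw k' * (2 * INR k' + 1) / (2 * INR k' + 2) end.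

Lemma cw_pos k : 0 < cw k.
Proof. induction k; simpl. lra. pose proof (pos_INR k). apply Rmult_lt_0_compat; [|apply Rinv_0_lt_compat; lra]. nra. Qed.

Lemma W_even_odd k : W (2*k) = PI/2 * cw k /\ W (2*k+1) = 1 / ((2 * INR k + 1) * cw k).
Proof.
  induction k as [|k [IH1 IH2]].
  - simpl. rewrite W0. replace (0+1)%nat with 1%nat by lia. rewrite W1. split; field.
  - pose proof (pos_INR k). pose proof (cw_pos k).
    assert (e1: INR (2*k+2) = 2*INR k+2) by (rewrite plus_INR, mult_INR; simpl; ring).
    assert (e2: INR (2*k+1) = 2*INR k+1) by (rewrite plus_INR, mult_INR; simpl; ring).
    assert (e3: INR (2*k+1+2) = 2*INR k+3) by (rewrite !plus_INR, mult_INR; simpl; ring).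
    assert (e4: INR (2*k+1+1) = 2*INR k+2) by (rewrite !plus_INR, mult_INR; simpl; ring).
    split.
    + replace (2 * S k)%nat with (2*k+2)%nat by lia.
      pose proof (W_rec (2*k)) as R. rewrite IH1, e1, e2 in R.
      simpl cw. apply (Rmult_eq_reg_l (2 * INR k + 2)). 2: lra.
      rewrite R. field. lra.
    + replace (2 * S k + 1)%nat with ((2*k+1)+2)%nat by lia.
      pose proof (W_rec (2*k+1)) as R. rewrite IH2, e3, e4 in R.
      simpl cw. rewrite S_INR.
      apply (Rmult_eq_reg_l (2 * INR k + 3)). 2: lra.
      rewrite R. field. split; lra.
Qed.

Lemma wallis k : (1 <= k)%nat -> 2 * INR k / (2 * INR k + 1) <= PI * INR k * cw k ^ 2 <= 1.
Proof.
  intros Hk. pose proof PI_RGT_0. split.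
  - pose proof (W_decr (2*k)) as D. replace (S (2*k)) with (2*k+1)%nat in D by lia.
    destruct (W_even_odd k) as [E1 E2]. rewrite E1, E2 in D.
    pose proof (pos_INR k). pose proof (cw_pos k).
    apply (Rmult_le_compat_r (cw k * (2 * INR k + 1))) in D; [|nra].
    replace (1 / ((2 * INR k + 1) * cw k) * (cw k * (2 * INR k + 1))) with 1 in D by (field; lra).
    apply (Rmult_le_reg_r (2 * INR k + 1)). lra.
    unfold Rdiv. rewrite Rmult_assoc, Rinv_l, Rmult_1_r by lra. nra.
  - destruct k as [|j]. lia.
    pose proof (W_decr (2*j+1)) as D. replace (S (2*j+1)) with (2*(S j))%nat in D by lia.
    destruct (W_even_odd (S j)) as [E1 _]. destruct (W_even_odd j) as [_ E2]. rewrite E1, E2 in D.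
    pose proof (pos_INR j). pose proof (cw_pos j).
    simpl cw in *. rewrite S_INR.
    set (c := cw j) in *.
    assert (Hc: PI / 2 * (c * (2 * INR j + 1) / (2 * INR j + 2)) * (c * (2 * INR j + 1)) <= 1).
    { apply (Rmult_le_compat_r (c * (2 * INR j + 1))) in D; [|nra].
      replace (1 / ((2 * INR j + 1) * c) * (c * (2 * INR j + 1))) with 1 in D by (field; lra). exact D. }
    replace (PI * (INR j + 1) * (c * (2 * INR j + 1) / (2 * INR j + 2)) ^ 2)
      with (PI / 2 * (c * (2 * INR j + 1) / (2 * INR j + 2)) * (c * (2 * INR j + 1))) by (field; lra).
    exact Hc.
Qed.

Lemma ln_le_x1 x : 0 < x -> ln x <= x - 1.
Proof. intros. pose proof (exp_ineq1_le (ln x)). rewrite exp_ln in H0; lra. Qed.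

Lemma ln_ge_1x x : 0 < x -> 1 - / x <= ln x.
Proof. intros. pose proof (ln_le_x1 (/x) (Rinv_0_lt_compat _ H)). rewrite ln_Rinv in H0; lra. Qed.

Lemma ln_le' x y : 0 < x -> x <= y -> ln x <= ln y.
Proof. intros Hx [H|H]. left; apply ln_increasing; auto. subst; lra. Qed.

Lemma cw_fact k : cw k = INR (fact (2*k)) / (INR (fact k) ^ 2 * 4 ^ k).
Proof.
  induction k.
  - simpl. field.
  - simpl cw. rewrite IHk.
    replace (2 * S k)%nat with (S (S (2*k))) by lia.
    rewrite !fact_simpl, !mult_INR, !S_INR, mult_INR. simpl.
    pose proof (INR_fact_pos k). pose proof (INR_fact_pos (k+(k+0))). pose proof (pos_INR k).
    replace (k + (k+0))%nat with (2*k)%nat by lia. replace (INR 2) with 2 by (simpl; ring).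
    field. split; [|split]; try lra. apply pow_nonzero; lra.
Qed.

Lemma ln_cw k : ln (cw k) = ln (INR (fact (2*k))) - 2 * ln (INR (fact k)) - 2 * INR k * ln 2.
Proof.
  pose proof (INR_fact_pos k) as F. pose proof (INR_fact_pos (2*k)) as F2.
  assert (P4 : 0 < 4 ^ k) by (apply pow_lt; lra).
  assert (PF : 0 < INR (fact k) ^ 2) by (apply pow_lt; lra).
  rewrite cw_fact. unfold Rdiv.
  rewrite ln_mult; [| lra | apply Rinv_0_lt_compat, Rmult_lt_0_compat; lra].
  rewrite ln_Rinv by (apply Rmult_lt_0_compat; lra).
  rewrite ln_mult by lra. rewrite !ln_pow by lra.
  replace 4 with (2*2) by ring. rewrite ln_mult by lra. simpl INR. ring.
Qed.

Lemma ln_kcw k : (1 <= k)%nat -> ln (INR k * cw k ^ 2) = 2 * a (2*k) - 4 * a k + ln 2.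
Proof.
  intros Hk. assert (Hk' : 0 < INR k) by (apply lt_0_INR; lia).
  pose proof (cw_pos k) as C.
  assert (H2k : INR (2*k) = 2 * INR k) by (rewrite mult_INR; simpl; ring).
  rewrite ln_mult by (try apply pow_lt; lra). rewrite ln_pow by lra. rewrite ln_cw.
  unfold a. rewrite H2k. rewrite ln_mult by lra. simpl INR. field.
Qed.

Definition mu : R := (ln 2 + ln PI) / 2.

Lemma a_lower n : (1 <= n)%nat -> mu <= a n.
Proof.
  intros Hn. destruct (Rle_or_lt mu (a n)) as [|Hlt]; auto. exfalso.
  destruct (archimed_cor1 (mu - a n)) as [N [HN HN0]]. lra.
  set (k := (N + n)%nat).
  assert (Hk : (1 <= k)%nat) by lia.
  assert (Hkpos : 0 < INR k) by (apply lt_0_INR; lia).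
  pose proof (a_mono n N Hn) as [M1 _]. replace (n+N)%nat with k in M1 by (unfold k; lia).
  pose proof (a_mono k k Hk) as [_ M2]. replace (k+k)%nat with (2*k)%nat in M2 by lia.
  destruct (wallis k Hk) as [_ Wu].
  pose proof (cw_pos k).
  assert (Lw : ln (INR k * cw k ^ 2) <= - ln PI).
  { rewrite <- ln_Rinv by apply PI_RGT_0. apply ln_le'. apply Rmult_lt_0_compat; auto. apply pow_lt; auto.
    pose proof PI_RGT_0. apply (Rmult_le_reg_l PI); auto. rewrite Rinv_r by lra. lra. }
  rewrite ln_kcw in Lw by auto.
  assert (1 / INR k <= / INR N).
  { assert (0 < INR N) by (apply lt_0_INR; lia). unfold Rdiv. rewrite Rmult_1_l. apply Rinv_le_contravar; auto.
    unfold k. rewrite plus_INR. pose proof (pos_INR n). lra. }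
  assert (0 < 1 / INR (2*k)). { unfold Rdiv; rewrite Rmult_1_l; apply Rinv_0_lt_compat, lt_0_INR; lia. }
  unfold mu in *. lra.
Qed.

Lemma a_upper n : (1 <= n)%nat -> a n <= mu + 1 / INR n.
Proof.
  intros Hn. destruct (Rle_or_lt (a n) (mu + 1 / INR n)) as [|Hlt]; auto. exfalso.
  destruct (archimed_cor1 (a n - mu - 1/INR n)) as [N [HN HN0]]. lra.
  set (k := (N + n)%nat).
  assert (Hk : (1 <= k)%nat) by lia.
  assert (Hkpos : 0 < INR k) by (apply lt_0_INR; lia).
  pose proof (a_mono n N Hn) as [_ M1]. replace (n+N)%nat with k in M1 by (unfold k; lia).
  pose proof (a_mono k k Hk) as [M2 _]. replace (k+k)%nat with (2*k)%nat in M2 by lia.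
  destruct (wallis k Hk) as [Wl _].
  pose proof (cw_pos k). pose proof PI_RGT_0.
  assert (Lw : ln (INR k * cw k ^ 2) >= - ln PI - 1 / INR k).
  { assert (E : INR k * cw k ^ 2 = / PI * (PI * INR k * cw k ^ 2)) by (field; lra).
    assert (0 < PI * INR k * cw k ^ 2) by (apply Rmult_lt_0_compat; [nra| apply pow_lt; lra]).
    rewrite E. rewrite ln_mult by (try apply Rinv_0_lt_compat; lra). rewrite ln_Rinv by lra.
    assert (0 < 2 * INR k / (2 * INR k + 1)) by (apply Rdiv_lt_0_compat; lra).
    pose proof (ln_le' _ _ H2 Wl).
    pose proof (ln_ge_1x _ H2).
    replace (1 - / (2 * INR k / (2 * INR k + 1))) with (- (1 / (2 * INR k))) in H4 by (field; lra).
    assert (1 / (2 * INR k) <= 1 / INR k). { unfold Rdiv. rewrite !Rmult_1_l. apply Rinv_le_contravar; lra. }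
    lra. }
  rewrite ln_kcw in Lw by auto.
  assert (1 / INR k <= / INR N).
  { assert (0 < INR N) by (apply lt_0_INR; lia). unfold Rdiv. rewrite Rmult_1_l. apply Rinv_le_contravar; auto.
    unfold k. rewrite plus_INR. pose proof (pos_INR n). lra. }
  assert (0 < 1 / INR k). { unfold Rdiv; rewrite Rmult_1_l; apply Rinv_0_lt_compat; lra. }
  unfold mu in *. lra.
Qed.

Definition binF (N m : nat) (q : R) : R :=
  INR (fact N) / (INR (fact m) * INR (fact (N - m))) * q ^ m * (1 - q) ^ (N - m).

Lemma Rabs_le_inv x b : Rabs x <= b -> - b <= x <= b.
Proof. unfold Rabs; destruct (Rcase_abs x); intros; lra. Qed.

Lemma ln_fact_a k : ln (INR (fact k)) = a k + (INR k + /2) * ln (INR k) - INR k.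
Proof. unfold a. ring. Qed.

Lemma ln_div x y : 0 < x -> 0 < y -> ln (x / y) = ln x - ln y.
Proof. intros. unfold Rdiv. rewrite ln_mult, ln_Rinv; auto. apply Rinv_0_lt_compat; auto. Qed.

Lemma ln_binF N m q : (m <= N)%nat -> 0 < q < 1 ->
  ln (binF N m q) = ln (INR (fact N)) - ln (INR (fact m)) - ln (INR (fact (N-m)))
     + INR m * ln q + INR (N - m) * ln (1-q).
Proof.
  intros Hm Hq. unfold binF.
  pose proof (INR_fact_pos N). pose proof (INR_fact_pos m). pose proof (INR_fact_pos (N-m)).
  assert (0 < q ^ m) by (apply pow_lt; lra). assert (0 < (1-q) ^ (N-m)) by (apply pow_lt; lra).
  assert (0 < INR (fact N) / (INR (fact m) * INR (fact (N - m)))).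
  { apply Rdiv_lt_0_compat; auto. apply Rmult_lt_0_compat; auto. }
  rewrite ln_mult by (try apply Rmult_lt_0_compat; auto).
  rewrite ln_mult by auto.
  rewrite ln_div by (try apply Rmult_lt_0_compat; auto). rewrite ln_mult by auto.
  rewrite !ln_pow by lra. ring.
Qed.

Lemma loc q : 0 < q < 1 -> exists K, 0 <= K /\ exists N0, (1 <= N0)%nat /\ forall N m, (N0 <= N)%nat -> (m <= N)%nat ->
   INR m <= INR N * q + 1 -> INR N * q - 1 <= INR m ->
   Rabs (ln (binF N m q) - (- mu - (ln (INR N) + ln q + ln (1-q)) / 2)) <= K / INR N.
Proof.
  intros Hq. set (Q := q * (1-q)).
  assert (HQ : 0 < Q) by (unfold Q; nra).
  assert (HQ1 : Q < q) by (unfold Q; nra). assert (HQ2 : Q < 1 - q) by (unfold Q; nra).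
  exists (1 + 4 / Q). split. { assert (0 < 4/Q) by (apply Rdiv_lt_0_compat; lra). lra. }
  destruct (archimed_cor1 (Q/4)) as [N0 [HN0 HN0']]. lra.
  exists N0. split. lia. intros N m HN Hm Hup Hlo.
  assert (Hn0 : INR N0 <= INR N) by (apply le_INR; auto).
  assert (0 < INR N0) by (apply lt_0_INR; lia).
  set (n := INR N) in *. set (x := INR m) in *.
  assert (Hn : 4 / Q < n).
  { apply Rlt_le_trans with (INR N0); auto.
    apply (Rmult_lt_reg_r (/ INR N0)). apply Rinv_0_lt_compat; auto.
    rewrite Rinv_r by lra. apply (Rmult_lt_reg_l (Q)); auto.
    replace (Q * (4 / Q * / INR N0)) with (4 * / INR N0) by (field; lra). lra. }
  assert (HnQ : 4 < n * Q). { apply (Rmult_lt_compat_r Q) in Hn; auto. unfold Rdiv in Hn. rewrite Rmult_assoc, Rinv_l in Hn; lra. }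
  assert (Hnpos : 0 < n) by nra.
  assert (Hnq : 4 < n * q) by nra. assert (Hnq' : 4 < n * (1-q)) by nra.
  set (r := INR (N - m)).
  assert (Hr : r = n - x) by (unfold r, n, x; rewrite minus_INR; auto).
  assert (Hx2 : n * q / 2 <= x) by lra.
  assert (Hr2 : n * (1-q) / 2 <= r) by lra.
  assert (Hxpos : 0 < x) by lra. assert (Hrpos : 0 < r) by lra.
  assert (Hm1 : (1 <= m)%nat). { destruct m. unfold x in Hxpos; simpl in Hxpos; lra. lia. }
  assert (Hr1 : (1 <= N - m)%nat). { destruct (N - m)%nat eqn:E. unfold r in Hrpos; simpl in Hrpos; lra. lia. }
  assert (HN1 : (1 <= N)%nat) by lia.
  pose proof (a_lower N HN1) as S1. pose proof (a_upper N HN1) as S2.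
  pose proof (a_lower m Hm1) as S3. pose proof (a_upper m Hm1) as S4.
  pose proof (a_lower (N-m) Hr1) as S5. pose proof (a_upper (N-m) Hr1) as S6.
  fold n in S2. fold x in S4. fold r in S6.
  assert (Ix : 1 / x <= 2 / (n*q)).
  { apply (Rmult_le_reg_r (x * (n*q))). nra. field_simplify; nra. }
  assert (Ir : 1 / r <= 2 / (n*(1-q))).
  { apply (Rmult_le_reg_r (r * (n*(1-q)))). nra. field_simplify; nra. }
  assert (IQ : 2 / (n*q) + 2 / (n*(1-q)) = 2 / (n*Q)) by (unfold Q; field; split; lra).
  rewrite ln_binF by (first [exact Hm | lra]).
  rewrite !ln_fact_a. fold n x r.
  set (A1 := ln n). set (Am := ln x). set (Ar := ln r). set (Lq := ln q). set (Lp := ln (1-q)).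
  assert (G1 : ln (x / (n*q)) = Am - A1 - Lq) by (rewrite ln_div, ln_mult; unfold Am, A1, Lq; try ring; nra).
  assert (G2 : ln (r / (n*(1-q))) = Ar - A1 - Lp) by (rewrite ln_div, ln_mult; unfold Ar, A1, Lp; try ring; nra).
  pose proof (ln_le_x1 (x / (n*q)) ltac:(apply Rdiv_lt_0_compat; nra)) as U1.
  pose proof (ln_ge_1x (x / (n*q)) ltac:(apply Rdiv_lt_0_compat; nra)) as L1.
  pose proof (ln_le_x1 (r / (n*(1-q))) ltac:(apply Rdiv_lt_0_compat; nra)) as U2.
  pose proof (ln_ge_1x (r / (n*(1-q))) ltac:(apply Rdiv_lt_0_compat; nra)) as L2.
  rewrite G1 in U1, L1. rewrite G2 in U2, L2.
  set (G := x * (Am - A1 - Lq) + r * (Ar - A1 - Lp)).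
  assert (Glo : 0 <= G).
  { unfold G. replace (/ (x / (n*q))) with (n*q/x) in L1 by (field; nra).
    replace (/ (r / (n*(1-q)))) with (n*(1-q)/r) in L2 by (field; nra).
    apply (Rmult_le_compat_l x) in L1; [|lra]. apply (Rmult_le_compat_l r) in L2; [|lra].
    replace (x * (1 - n*q/x)) with (x - n*q) in L1 by (field; lra).
    replace (r * (1 - n*(1-q)/r)) with (r - n*(1-q)) in L2 by (field; lra). lra. }
  assert (Ghi : G <= 1 / (n * Q)).
  { unfold G. apply (Rmult_le_compat_l x) in U1; [|lra]. apply (Rmult_le_compat_l r) in U2; [|lra].
    assert (E : x * (x / (n*q) - 1) + r * (r / (n*(1-q)) - 1) = (x - n*q)^2 / (n*Q)).
    { rewrite Hr. unfold Q. field. split; lra. }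
    assert ((x - n*q)^2 <= 1) by (simpl; nra).
    assert ((x - n*q)^2 / (n*Q) <= 1 / (n*Q)). { apply Rmult_le_compat_r; auto. left; apply Rinv_0_lt_compat; nra. }
    lra. }
  set (X := x * r / (n^2 * Q)).
  assert (HXpos : 0 < X) by (unfold X; apply Rdiv_lt_0_compat; nra).
  assert (LX : ln X = Am + Ar - 2 * A1 - Lq - Lp).
  { unfold X, Q. rewrite ln_div by nra. rewrite !ln_mult by nra. simpl. rewrite Rmult_1_r, ln_mult by lra. fold A1 Am Ar Lq Lp. ring. }
  assert (HX1 : Rabs (X - 1) <= 2 / (n * Q)).
  { unfold X. replace (x * r / (n^2 * Q) - 1) with ((x*r - n^2*Q) / (n^2*Q)) by (field; nra).
    rewrite Rabs_div by nra. rewrite (Rabs_pos_eq (n^2*Q)) by nra.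
    apply (Rmult_le_reg_r (n^2*Q)). nra.
    replace (Rabs (x * r - n ^ 2 * Q) / (n ^ 2 * Q) * (n ^ 2 * Q)) with (Rabs (x * r - n ^ 2 * Q)) by (field; nra).
    replace (2 / (n*Q) * (n^2*Q)) with (2*n) by (field; nra).
    rewrite Hr. unfold Q. apply Rabs_le. split; nra. }
  assert (H2nQ : 2 / (n*Q) <= 1/2). { apply (Rmult_le_reg_r (n*Q)). nra. field_simplify; nra. }
  apply Rabs_le_inv in HX1.
  pose proof (ln_le_x1 X HXpos) as XU. pose proof (ln_ge_1x X HXpos) as XL.
  assert (XL' : - (4 / (n*Q)) <= ln X).
  { assert (1 - / X = (X - 1) / X) by (field; lra).
    assert (- (4 / (n*Q)) <= (X-1)/X).
    { apply (Rmult_le_reg_r X); auto. unfold Rdiv at 2. rewrite Rmult_assoc, Rinv_l, Rmult_1_r by lra.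
      assert (0 < 4 / (n*Q)) by (apply Rdiv_lt_0_compat; nra).
      replace (4 / (n*Q)) with (2 * (2 / (n*Q))) by (field; nra). nra. }
    lra. }
  assert (Eps : ln (INR (fact N)) - ln (INR (fact m)) - ln (INR (fact (N-m))) + x * Lq + r * Lp
     - (- mu - (A1 + Lq + Lp)/2) = (a N - a m - a (N-m) + mu) - ln X / 2 - G).
  { rewrite !ln_fact_a. fold n x r. rewrite LX. unfold G. fold A1 Am Ar. rewrite Hr. field. }
  replace (a N + (n + / 2) * A1 - n - (a m + (x + / 2) * Am - x) - (a (N - m) + (r + / 2) * Ar - r) +
    x * Lq + r * Lp - (- mu - (A1 + Lq + Lp) / 2)) with ((a N - a m - a (N-m) + mu) - ln X / 2 - G).
  2:{ rewrite <- Eps. rewrite !ln_fact_a. fold n x r A1 Am Ar. ring. }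
  assert (E4 : (1 + 4/Q) / n = 1/n + 4/(n*Q)) by (field; lra).
  rewrite E4.
  assert (E2 : 4 / (n*Q) = 2 * (2 / (n*Q))) by (field; nra).
  assert (E1 : 1 / (n*Q) <= 2 / (n*Q)). { unfold Rdiv. apply Rmult_le_compat_r. left; apply Rinv_0_lt_compat; nra. lra. }
  apply Rabs_le. split; lra.
Qed.

Lemma sqrt_exp_half X : 0 < X -> sqrt X = exp (ln X / 2).
Proof.
  intros. apply sqrt_lem_1. lra. left; apply exp_pos.
  rewrite <- exp_plus. replace (ln X / 2 + ln X / 2) with (ln X) by field. apply exp_ln; auto.
Qed.

Lemma exp_close e : Rabs e <= 1/2 -> Rabs (exp e - 1) <= 2 * Rabs e.
Proof.
  intros H. apply Rabs_le_inv in H. pose proof (exp_ineq1_le e).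
  pose proof (exp_ineq1_le (-e)). rewrite exp_Ropp in H1. pose proof (exp_pos e).
  assert (exp e <= / (1 - e)).
  { apply (Rmult_le_reg_r (1 - e)). lra. rewrite Rinv_l by lra.
    apply (Rmult_le_reg_l (/ exp e)). apply Rinv_0_lt_compat; lra.
    rewrite <- Rmult_assoc, Rinv_l, Rmult_1_l, Rmult_1_r by lra. lra. }
  assert (/ (1 - e) <= 1 + 2 * Rabs e).
  { apply (Rmult_le_reg_r (1 - e)). lra. rewrite Rinv_l by lra.
    unfold Rabs; destruct (Rcase_abs e); nra. }
  apply Rabs_le. unfold Rabs in *; destruct (Rcase_abs e); lra.
Qed.

Lemma pow_le1 x n : 0 <= x <= 1 -> x ^ n <= 1.
Proof. intros H. induction n; simpl. lra. assert (0 <= x^n) by (apply pow_le; lra). nra. Qed.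

Lemma binF_nonneg N m q : 0 < q < 1 -> 0 <= binF N m q.
Proof.
  intros. unfold binF. pose proof (INR_fact_pos N). pose proof (INR_fact_pos m). pose proof (INR_fact_pos (N-m)).
  apply Rmult_le_pos; [apply Rmult_le_pos|]; try (apply pow_le; lra).
  left. apply Rdiv_lt_0_compat; auto. apply Rmult_lt_0_compat; auto.
Qed.

Lemma binF_le_fact N m q : 0 < q < 1 -> binF N m q <= INR (fact N).
Proof.
  intros. unfold binF. pose proof (INR_fact_pos N). pose proof (INR_fact_pos m). pose proof (INR_fact_pos (N-m)).
  assert (1 <= INR (fact m)) by (apply (le_INR 1); pose proof (lt_O_fact m); lia).
  assert (1 <= INR (fact (N-m))) by (apply (le_INR 1); pose proof (lt_O_fact (N-m)); lia).
  assert (q^m <= 1) by (apply pow_le1; lra). assert ((1-q)^(N-m) <= 1) by (apply pow_le1; lra).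
  assert (0 <= q^m) by (apply pow_le; lra). assert (0 <= (1-q)^(N-m)) by (apply pow_le; lra).
  assert (INR (fact N) / (INR (fact m) * INR (fact (N - m))) <= INR (fact N)).
  { apply (Rmult_le_reg_r (INR (fact m) * INR (fact (N - m)))). nra.
    unfold Rdiv. rewrite Rmult_assoc, Rinv_l by nra.
    assert (1 <= INR (fact m) * INR (fact (N - m))) by nra. nra. }
  assert (0 <= INR (fact N) / (INR (fact m) * INR (fact (N - m)))).
  { left; apply Rdiv_lt_0_compat; auto; nra. }
  assert (INR (fact N) / (INR (fact m) * INR (fact (N - m))) * q ^ m <= INR (fact N)) by nra.
  nra.
Qed.

Lemma key q : 0 < q < 1 -> exists K, 0 <= K /\ forall T m, (1 <= T)%nat ->
  INR m <= INR T * q < INR m + 1 ->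
  Rabs (binF (T-1) m q - / sqrt (2 * PI * INR T * q * (1-q))) <= K / INR T.
Proof.
  intros Hq. destruct (loc q Hq) as [K [HK [N0 [HN0 Hloc]]]].
  set (Q := q * (1-q)). assert (HQ : 0 < Q) by (unfold Q; nra).
  destruct (archimed_cor1 (/ (2*K+1))) as [N2 [HN2 HN2']]. apply Rinv_0_lt_compat; lra.
  set (N1 := (N0 + N2)%nat).
  set (Z1 := / sqrt (2 * PI * Q)).
  pose proof PI_RGT_0.
  assert (HZ1 : 0 < Z1) by (unfold Z1; apply Rinv_0_lt_compat, sqrt_lt_R0; nra).
  exists (Z1 * (4*K+1) + (INR (fact N1) + Z1) * INR (S N1)). split.
  { pose proof (pos_INR (fact N1)). pose proof (pos_INR (S N1)). nra. }
  intros T m HT [Hm1 Hm2].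
  assert (HTpos : 0 < INR T) by (apply lt_0_INR; lia).
  assert (PQ : 0 < 2 * PI * Q) by nra.
  assert (PT : 0 < 2 * PI * INR T * q * (1 - q)).
  { replace (2 * PI * INR T * q * (1 - q)) with ((2 * PI * Q) * INR T) by (unfold Q; ring). nra. }
  set (Y := / sqrt (2 * PI * INR T * q * (1 - q))).
  assert (HY : 0 < Y) by (unfold Y; apply Rinv_0_lt_compat, sqrt_lt_R0; nra).
  assert (HYZ : Y <= Z1).
  { unfold Y, Z1. apply Rinv_le_contravar. apply sqrt_lt_R0; nra. apply sqrt_le_1_alt.
    assert (1 <= INR T) by (apply (le_INR 1); lia).
    replace (2 * PI * INR T * q * (1 - q)) with ((2 * PI * Q) * INR T) by (unfold Q; ring). nra. }
  assert (HmT : (m <= T - 1)%nat).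
  { assert (INR m < INR T) by nra. apply INR_lt in H0. lia. }
  pose proof (binF_nonneg (T-1) m q Hq).
  destruct (le_lt_dec (T-1) N1) as [Hsmall | Hbig].
  -
    pose proof (binF_le_fact (T-1) m q Hq).
    assert (INR (fact (T-1)) <= INR (fact N1)) by (apply le_INR, fact_le; auto).
    assert (INR T <= INR (S N1)) by (apply le_INR; lia).
    apply Rle_trans with (INR (fact N1) + Z1).
    { apply Rabs_le. lra. }
    apply Rle_trans with ((INR (fact N1) + Z1) * INR (S N1) / INR T).
    { apply (Rmult_le_reg_r (INR T)); auto. unfold Rdiv. rewrite Rmult_assoc, Rinv_l, Rmult_1_r by lra.
      pose proof (pos_INR (fact N1)). nra. }
    unfold Rdiv. apply Rmult_le_compat_r. left; apply Rinv_0_lt_compat; auto.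
    pose proof (pos_INR (fact N1)). nra.
  - set (N := (T - 1)%nat).
    assert (HN : INR N = INR T - 1) by (unfold N; rewrite minus_INR by lia; simpl; ring).
    assert (HNpos : 1 <= INR N) by (apply (le_INR 1); unfold N; lia).
    assert (Hl := Hloc N m ltac:(unfold N, N1 in *; lia) HmT ltac:(rewrite HN; nra) ltac:(rewrite HN; nra)).
    set (e := ln (binF N m q) - (- mu - (ln (INR N) + ln q + ln (1-q)) / 2)) in Hl.
    assert (HN2K : 2 * K + 1 <= INR N).
    { assert (INR N2 <= INR N) by (apply le_INR; unfold N, N1 in *; lia).
      assert (HN2p : 0 < INR N2) by (apply lt_0_INR; lia).
      destruct (Rle_or_lt (INR N2) (2*K+1)) as [h|h]; [exfalso; pose proof (Rinv_le_contravar _ _ HN2p h); lra | lra]. }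
    assert (He : Rabs e <= 1/2).
    { apply Rle_trans with (K / INR N); auto. apply (Rmult_le_reg_r (INR N)). lra.
      unfold Rdiv. rewrite Rmult_assoc, Rinv_l by lra. lra. }
    assert (PN : 0 < 2 * PI * INR N * q * (1 - q)).
    { replace (2 * PI * INR N * q * (1 - q)) with ((2 * PI * Q) * INR N) by (unfold Q; ring). nra. }
    set (Z := / sqrt (2 * PI * INR N * q * (1 - q))).
    assert (HZpos : 0 < Z) by (unfold Z; apply Rinv_0_lt_compat, sqrt_lt_R0; nra).
    assert (HZ : Z <= Z1).
    { unfold Z, Z1. apply Rinv_le_contravar. apply sqrt_lt_R0; nra. apply sqrt_le_1_alt.
      replace (2 * PI * INR N * q * (1 - q)) with ((2 * PI * Q) * INR N) by (unfold Q; ring). nra. }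
    assert (Hb : binF N m q = Z * exp e).
    { unfold Z, e. rewrite sqrt_exp_half by nra.
      rewrite <- exp_Ropp, <- exp_plus.
      assert (0 < binF N m q).
      { unfold binF. pose proof (INR_fact_pos N). pose proof (INR_fact_pos m). pose proof (INR_fact_pos (N-m)).
        apply Rmult_lt_0_compat; [apply Rmult_lt_0_compat|]; try (apply pow_lt; lra).
        apply Rdiv_lt_0_compat; auto. apply Rmult_lt_0_compat; auto. }
      rewrite <- (exp_ln (binF N m q)) at 1 by auto. f_equal.
      rewrite !ln_mult by nra. unfold mu. field. }
    set (s := sqrt (INR N / INR T)).
    assert (HYs : Y = Z * s).
    { assert (E1 : Y * Y = / (2 * PI * INR T * q * (1 - q))).
      { unfold Y. rewrite <- Rinv_mult. rewrite sqrt_sqrt; lra. }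
      assert (E2 : Z * Z = / (2 * PI * INR N * q * (1 - q))).
      { unfold Z. rewrite <- Rinv_mult. rewrite sqrt_sqrt; lra. }
      assert (E3 : s * s = INR N / INR T).
      { unfold s. rewrite sqrt_sqrt. auto. apply Rdiv_le_0_compat; lra. }
      assert (0 <= s) by (unfold s; apply sqrt_pos).
      apply Rsqr_inj. lra. nra. unfold Rsqr.
      replace (Z * s * (Z * s)) with ((Z*Z) * (s*s)) by ring. rewrite E1, E2, E3.
      field. repeat split; try lra. }
    assert (Hs : 0 <= 1 - s <= 1 / INR T).
    { assert (0 <= INR N / INR T <= 1). { split. apply Rdiv_le_0_compat; lra.
        apply (Rmult_le_reg_r (INR T)); auto. unfold Rdiv; rewrite Rmult_assoc, Rinv_l by lra. lra. }
      assert (s <= 1) by (unfold s; rewrite <- sqrt_1; apply sqrt_le_1_alt; lra).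
      assert (INR N / INR T <= s).
      { unfold s. rewrite <- (sqrt_pow2 (INR N / INR T)) at 1 by lra. apply sqrt_le_1_alt. simpl. nra. }
      assert (INR N / INR T = 1 - 1 / INR T) by (rewrite HN; field; lra). lra. }
    fold N. rewrite Hb, HYs.
    pose proof (exp_close e He) as Ee.
    replace (Z * exp e - Z * s) with (Z * ((exp e - 1) + (1 - s))) by ring.
    rewrite Rabs_mult, (Rabs_pos_eq Z) by lra.
    assert (Rabs ((exp e - 1) + (1 - s)) <= 2 * (K / INR N) + 1 / INR T).
    { eapply Rle_trans. apply Rabs_triang. rewrite (Rabs_pos_eq (1 - s)) by lra. lra. }
    assert (K / INR N <= 2 * K / INR T).
    { apply (Rmult_le_reg_r (INR N * INR T)). nra.
      replace (K / INR N * (INR N * INR T)) with (K * INR T) by (field; lra).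
      replace (2 * K / INR T * (INR N * INR T)) with (2 * K * INR N) by (field; lra). nra. }
    assert (0 <= Rabs ((exp e - 1) + (1 - s))) by apply Rabs_pos.
    apply Rle_trans with (Z1 * ((4*K+1) / INR T)).
    { apply Rmult_le_compat; try lra. all: replace ((4*K+1) / INR T) with (2 * (2*K/INR T) + 1 / INR T) by (field; lra); lra. }
    assert (0 <= (INR (fact N1) + Z1) * INR (S N1) / INR T).
    { pose proof (pos_INR (fact N1)). pose proof (pos_INR (S N1)). apply Rdiv_le_0_compat; nra. }
    replace ((Z1 * (4 * K + 1) + (INR (fact N1) + Z1) * INR (S N1)) / INR T) with
      (Z1 * ((4*K+1) / INR T) + (INR (fact N1) + Z1) * INR (S N1) / INR T) by (field; lra).
    lra.
Qed.

Definition bz (q : R) (T k : nat) : R := if (k <=? T)%nat then binF T k q else 0.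

Fixpoint Bexp (q : R) (T : nat) (g : nat -> R) : R :=
  match T with
  | O => g O
  | S T' => q * Bexp q T' (fun k => g (S k)) + (1 - q) * Bexp q T' g
  end.

Lemma binF_C N m q : binF N m q = Binomial.C N m * q ^ m * (1 - q) ^ (N - m).
Proof. reflexivity. Qed.

Lemma C_0 n : Binomial.C n 0 = 1.
Proof. unfold Binomial.C. rewrite Nat.sub_0_r. simpl. pose proof (INR_fact_pos n). field. lra. Qed.

Lemma C_nn n : Binomial.C n n = 1.
Proof. unfold Binomial.C. rewrite Nat.sub_diag. simpl. pose proof (INR_fact_pos n). field. lra. Qed.

Lemma bz_S0 q T : bz q (S T) 0 = (1 - q) * bz q T 0.
Proof. unfold bz. simpl Nat.leb. cbv iota. rewrite !binF_C, !C_0, !Nat.sub_0_r. simpl pow. ring. Qed.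

Lemma bz_SS q T k : bz q (S T) (S k) = q * bz q T k + (1 - q) * bz q T (S k).
Proof.
  unfold bz. simpl (S k <=? S T)%nat.
  destruct (Nat.leb_spec k T) as [Hk|Hk].
  - destruct (Nat.leb_spec (S k) T) as [Hk'|Hk'].
    + rewrite !binF_C. rewrite <- pascal by lia.
      replace (S T - S k)%nat with (S (T - S k)) by lia.
      replace (T - k)%nat with (S (T - S k)) by lia. simpl. ring.
    + assert (k = T) by lia. subst. rewrite !binF_C, !C_nn, !Nat.sub_diag. simpl. ring.
  - destruct (Nat.leb_spec (S k) T); [lia|]. ring.
Qed.

Lemma bz_out q T k : (T < k)%nat -> bz q T k = 0.
Proof. intros. unfold bz. destruct (Nat.leb_spec k T); [lia|auto]. Qed.

Lemma sum_shift_last (f : nat -> R) n : f (S n) = 0 -> sum_f_R0 f (S n) = sum_f_R0 f n.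
Proof. intros. rewrite tech5. lra. Qed.

Lemma sum_scal (f : nat -> R) c n : sum_f_R0 (fun i => c * f i) n = c * sum_f_R0 f n.
Proof. induction n; simpl. ring. rewrite IHn. ring. Qed.

Lemma Bexp_closed q T : forall g, Bexp q T g = sum_f_R0 (fun k => bz q T k * g k) T.
Proof.
  induction T; intros g.
  - simpl. unfold bz. simpl. rewrite binF_C, C_0. simpl. ring.
  - simpl Bexp. rewrite !IHT.
    rewrite (decomp_sum _ (S T)) by lia. simpl pred.
    rewrite bz_S0.
    rewrite (sum_eq (fun i => bz q (S T) (S i) * g (S i)) (fun i => q * (bz q T i * g (S i)) + (1-q) * (bz q T (S i) * g (S i)))).
    2:{ intros. rewrite bz_SS. ring. }
    rewrite plus_sum, !sum_scal.
    assert (E : bz q T 0 * g 0%nat + sum_f_R0 (fun i => bz q T (S i) * g (S i)) T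
               = sum_f_R0 (fun k => bz q T k * g k) T).
    { destruct T.
      - simpl. rewrite (bz_out q 0 1) by lia. ring.
      - rewrite (decomp_sum (fun k => bz q (S T) k * g k) (S T)) by lia. simpl pred.
        rewrite sum_shift_last. auto. rewrite bz_out by lia. ring. }
    rewrite <- E. ring.
Qed.

Lemma C1 N i : (i <= N)%nat -> INR (S i) * Binomial.C (S N) (S i) = INR (S N) * Binomial.C N i.
Proof.
  intros. unfold Binomial.C. simpl (S N - S i)%nat.
  rewrite !fact_simpl, !mult_INR.
  pose proof (INR_fact_pos N). pose proof (INR_fact_pos i). pose proof (INR_fact_pos (N-i)).
  pose proof (lt_0_INR (S i) ltac:(lia)). pose proof (lt_0_INR (S N) ltac:(lia)).
  field. repeat split; lra.
Qed.

Lemma C2 N i : (i < N)%nat -> (INR N - INR i) * Binomial.C (S N) (S i) = INR (S N) * Binomial.C N (S i).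
Proof.
  intros. unfold Binomial.C. simpl (S N - S i)%nat.
  replace (N - i)%nat with (S (N - S i)) by lia.
  rewrite !fact_simpl, !mult_INR.
  replace (INR (S (N - S i))) with (INR N - INR i) by (rewrite S_INR, minus_INR by lia; rewrite S_INR; ring).
  pose proof (INR_fact_pos N). pose proof (INR_fact_pos i). pose proof (INR_fact_pos (N- S i)).
  pose proof (lt_0_INR (S i) ltac:(lia)). pose proof (lt_0_INR (S N) ltac:(lia)).
  assert (0 < INR N - INR i). { assert (INR i < INR N) by (apply lt_INR; lia). lra. }
  field. repeat split; lra.
Qed.

Definition Rt (q : R) (N k : nat) : R := match k with O => 0 | S i => bz q N i end.

Lemma tel_id q N k : (k <= S N)%nat ->
  bz q (S N) k * (INR k - INR (S N) * q) = INR (S N) * q * (1 - q) * (Rt q N k - Rt q N (S k)).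
Proof.
  intros Hk. destruct k as [|i].
  - unfold Rt, bz. simpl Nat.leb. cbv iota. rewrite !binF_C, !C_0, !Nat.sub_0_r. simpl. ring.
  - unfold Rt. unfold bz. replace (S i <=? S N)%nat with true by (symmetry; apply Nat.leb_le; lia).
    replace (i <=? N)%nat with true by (symmetry; apply Nat.leb_le; lia).
    rewrite !binF_C.
    replace (S N - S i)%nat with (N - i)%nat by lia.
    destruct (Nat.leb_spec (S i) N) as [Hi|Hi].
    +
      replace (N - i)%nat with (S (N - S i)) by lia.
      assert (E : INR (S i) - INR (S N) * q = INR (S i) * (1 - q) - (INR N - INR i) * q) by (rewrite !S_INR; ring).
      rewrite E.
      replace (Binomial.C (S N) (S i) * q ^ S i * (1 - q) ^ S (N - S i) * (INR (S i) * (1 - q) - (INR N - INR i) * q))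
        with ((INR (S i) * Binomial.C (S N) (S i)) * q ^ S i * (1 - q) ^ S (N - S i) * (1 - q)
              - ((INR N - INR i) * Binomial.C (S N) (S i)) * q ^ S i * (1 - q) ^ S (N - S i) * q) by ring.
      rewrite C1, C2 by lia. simpl. ring.
    + assert (i = N) by lia. subst i. rewrite Nat.sub_diag.
      rewrite !C_nn. simpl. ring.
Qed.


Lemma m_le_N (q : R) (Hq : 0 < q < 1) (N m : nat) (Hm1 : INR m <= INR (S N) * q) (Hm2 : INR (S N) * q < INR m + 1) : (m <= N)%nat.
Proof.
  assert (INR m < INR (S N)). { rewrite S_INR in *. pose proof (pos_INR N). nra. }
  apply INR_lt in H. lia.
Qed.

Lemma SA_val (q : R) (Hq : 0 < q < 1) (N m : nat) (Hm1 : INR m <= INR (S N) * q) (Hm2 : INR (S N) * q < INR m + 1) n : (n <= S N)%nat ->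
  sum_f_R0 (fun k => bz q (S N) k * Rmax 0 ((INR (S N) * q) - INR k)) n = INR (S N) * q * (1 - q) * bz q N (Nat.min n m).
Proof.
  set (c := INR (S N) * q) in *.
  pose proof (m_le_N q Hq N m Hm1 Hm2). assert (Hc : 0 < c) by (unfold c; rewrite S_INR; pose proof (pos_INR N); nra).
  induction n; intros Hn.
  - cbn [sum_f_R0 Nat.min]. change (INR 0) with 0. rewrite Rmax_right by lra.
    pose proof (tel_id q N 0 ltac:(lia)) as E. cbn [Rt] in E. change (INR 0) with 0 in E. fold c in E. fold c. replace (bz q (S N) 0 * (c - 0)) with (- (bz q (S N) 0 * (0 - c))) by ring. rewrite E. unfold c. ring.
  - rewrite tech5, IHn by lia.
    destruct (Nat.leb_spec (S n) m) as [H1|H1].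
    + replace (Nat.min (S n) m) with (S n) by lia. replace (Nat.min n m) with n by lia.
      assert (INR (S n) <= c) by (apply Rle_trans with (INR m); [apply le_INR; lia | auto]).
      rewrite Rmax_right by lra.
      pose proof (tel_id q N (S n) ltac:(lia)) as E. simpl Rt in E.
      replace (bz q (S N) (S n) * (c - INR (S n))) with (-(bz q (S N) (S n) * (INR (S n) - c))) by ring.
      unfold c. rewrite E. ring.
    + replace (Nat.min (S n) m) with m by lia. replace (Nat.min n m) with m by lia.
      assert (c < INR (S n)). { apply Rlt_le_trans with (INR m + 1); auto. rewrite <- S_INR. apply le_INR; lia. }
      rewrite Rmax_left by lra. ring.
Qed.

Lemma SB_val (q : R) (Hq : 0 < q < 1) (N m : nat) (Hm1 : INR m <= INR (S N) * q) (Hm2 : INR (S N) * q < INR m + 1) n : (n <= S N)%nat ->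
  sum_f_R0 (fun k => bz q (S N) k * Rmax 0 (INR k - (INR (S N) * q))) n = INR (S N) * q * (1 - q) * (bz q N m - bz q N (Nat.max n m)).
Proof.
  set (c := INR (S N) * q) in *.
  pose proof (m_le_N q Hq N m Hm1 Hm2). assert (Hc : 0 < c) by (unfold c; rewrite S_INR; pose proof (pos_INR N); nra).
  induction n; intros Hn.
  - cbn [sum_f_R0 Nat.max]. change (INR 0) with 0. rewrite Rmax_left by lra. replace (Nat.max 0 m) with m by lia. ring.
  - rewrite tech5, IHn by lia.
    destruct (Nat.leb_spec (S n) m) as [H1|H1].
    + replace (Nat.max (S n) m) with m by lia. replace (Nat.max n m) with m by lia.
      assert (INR (S n) <= c) by (apply Rle_trans with (INR m); [apply le_INR; lia | auto]).
      rewrite Rmax_left by lra. ring.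
    + replace (Nat.max (S n) m) with (S n) by lia. replace (Nat.max n m) with n by lia.
      assert (c < INR (S n)). { apply Rlt_le_trans with (INR m + 1); auto. rewrite <- S_INR. apply le_INR; lia. }
      rewrite Rmax_right by lra.
      pose proof (tel_id q N (S n) ltac:(lia)) as E. simpl Rt in E.
      unfold c. rewrite E. ring.
Qed.

Lemma Rmax_div x d : 0 < d -> Rmax 0 (x / d) = Rmax 0 x / d.
Proof.
  intros. unfold Rmax. destruct (Rle_dec 0 (x/d)), (Rle_dec 0 x); try (unfold Rdiv; ring).
  - exfalso. apply n. apply (Rmult_le_reg_r (/d)). apply Rinv_0_lt_compat; auto. lra.
  - exfalso. apply n. apply Rdiv_le_0_compat; lra.
Qed.

Lemma Bexp_lower_val (q : R) (Hq : 0 < q < 1) (N m : nat) (Hm1 : INR m <= INR (S N) * q) (Hm2 : INR (S N) * q < INR m + 1) :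
  Bexp q (S N) (fun k => Rmax 0 ((INR (S N) * q) - INR k) / (INR (S N) * q) + Rmax 0 (INR k - (INR (S N) * q)) / (INR (S N) * (1 - q))) = binF N m q.
Proof.
  set (c := INR (S N) * q) in *.
  pose proof (m_le_N q Hq N m Hm1 Hm2). assert (Hc : 0 < c) by (unfold c; rewrite S_INR; pose proof (pos_INR N); nra).
  assert (HT : 0 < INR (S N)) by (apply lt_0_INR; lia).
  rewrite Bexp_closed.
  rewrite (sum_eq _ (fun k => / c * (bz q (S N) k * Rmax 0 (c - INR k)) + / (INR (S N) * (1 - q)) * (bz q (S N) k * Rmax 0 (INR k - c)))).
  2:{ intros. unfold Rdiv. ring. }
  rewrite plus_sum, !sum_scal, (SA_val q Hq N m Hm1 Hm2), (SB_val q Hq N m Hm1 Hm2) by lia.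
  replace (Nat.min (S N) m) with m by lia. replace (Nat.max (S N) m) with (S N) by lia.
  rewrite (bz_out q N (S N)) by lia.
  unfold bz. replace (m <=? N)%nat with true by (symmetry; apply Nat.leb_le; lia).
  unfold c. field. split; lra.
Qed.

Lemma Bexp_upper_val (q : R) (Hq : 0 < q < 1) (N m : nat) (Hm1 : INR m <= INR (S N) * q) (Hm2 : INR (S N) * q < INR m + 1) :
  Bexp q (S N) (fun k => Rmax 0 (1 - INR k / INR (S N) / q)) = (1 - q) * binF N m q.
Proof.
  set (c := INR (S N) * q) in *.
  pose proof (m_le_N q Hq N m Hm1 Hm2). assert (Hc : 0 < c) by (unfold c; rewrite S_INR; pose proof (pos_INR N); nra).
  assert (HT : 0 < INR (S N)) by (apply lt_0_INR; lia).
  rewrite Bexp_closed.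
  rewrite (sum_eq _ (fun k => / c * (bz q (S N) k * Rmax 0 (c - INR k)))).
  2:{ intros. replace (1 - INR i / INR (S N) / q) with ((c - INR i) / c) by (unfold c; field; split; lra).
      rewrite Rmax_div by auto. unfold Rdiv. ring. }
  rewrite sum_scal, (SA_val q Hq N m Hm1 Hm2) by lia.
  replace (Nat.min (S N) m) with m by lia.
  unfold bz. replace (m <=? N)%nat with true by (symmetry; apply Nat.leb_le; lia).
  unfold c. field. lra.
Qed.


Fixpoint cntA (A : nat -> bool) (s : list nat) : nat :=
  match s with [] => 0%nat | x :: s' => ((if A x then 1 else 0) + cntA A s')%nat end.

Lemma sumR_app a b : sumR (a ++ b) = sumR a + sumR b.
Proof. induction a; simpl. ring. rewrite IHa. ring. Qed.

Lemma sumR_map_plus {X} (f g : X -> R) L : sumR (map (fun x => f x + g x) L) = sumR (map f L) + sumR (map g L).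
Proof. induction L; simpl. ring. rewrite IHL. ring. Qed.

Lemma sumR_map_scal {X} (f : X -> R) c L : sumR (map (fun x => c * f x) L) = c * sumR (map f L).
Proof. induction L; simpl. ring. rewrite IHL. ring. Qed.

Lemma sumR_map_ext_in {X} (f g : X -> R) L : (forall x, In x L -> f x = g x) -> sumR (map f L) = sumR (map g L).
Proof. intros H. induction L; simpl. auto. rewrite H, IHL; auto. intros; apply H; simpl; auto. simpl; auto. Qed.

Lemma sumR_map_le {X} (f g : X -> R) L : (forall x, In x L -> f x <= g x) -> sumR (map f L) <= sumR (map g L).
Proof. intros H. induction L as [|a L IHL]; simpl. lra. assert (f a <= g a) by (apply H; simpl; auto).
  assert (sumR (map f L) <= sumR (map g L)) by (apply IHL; intros; apply H; simpl; auto). lra. Qed.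

Lemma sumR_flat_map {X Y} (F : Y -> R) (G : X -> list Y) L :
  sumR (map F (flat_map G L)) = sumR (map (fun x => sumR (map F (G x))) L).
Proof. induction L; simpl. auto. rewrite map_app, sumR_app, IHL. auto. Qed.

Lemma sumR_swap {X Y} (F : X -> Y -> R) L1 L2 :
  sumR (map (fun x => sumR (map (fun y => F x y) L2)) L1) = sumR (map (fun y => sumR (map (fun x => F x y) L1)) L2).
Proof.
  induction L1; simpl.
  - induction L2; simpl; auto. rewrite <- IHL2. ring.
  - rewrite IHL1. rewrite <- sumR_map_plus. auto.
Qed.

Lemma sumR_nonneg_le {X} (h : X -> R) L x : In x L -> (forall y, In y L -> 0 <= h y) -> h x <= sumR (map h L).
Proof.
  intros Hx H. induction L as [|a L IHL]; simpl in *. contradiction.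
  assert (0 <= sumR (map h L)).
  { clear IHL Hx. induction L as [|a0 L IHL]; simpl. lra. assert (0 <= h a0) by (apply H; simpl; auto).
    assert (0 <= sumR (map h L)). apply IHL. intros; apply H; simpl in *; tauto. lra. }
  destruct Hx as [->|Hx]. assert (0 <= h x) by (apply H; auto). lra.
  assert (0 <= h a) by (apply H; auto). assert (h x <= sumR (map h L)) by (apply IHL; auto). lra.
Qed.

Lemma all_seqs_in l T s : In s (all_seqs l T) -> length s = T /\ (forall j, In j s -> (j < l)%nat).
Proof.
  revert s. induction T; intros s Hs; simpl in Hs.
  - destruct Hs as [<-|[]]. simpl. split; auto. intros j [].
  - apply in_flat_map in Hs. destruct Hs as [s' [Hs' Hin]]. apply in_map_iff in Hin.
    destruct Hin as [j [<- Hj]]. apply in_seq in Hj. destruct (IHT s' Hs') as [L1 L2].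
    simpl. split. auto. intros i [<-|Hi]. lia. auto.
Qed.

Lemma seq_prob_nonneg l (p : nat -> R) s : (forall j, (j < l)%nat -> 0 < p j) -> (forall j, In j s -> (j < l)%nat) -> 0 <= seq_prob p s.
Proof.
  intros Hp. induction s as [|a s IHs]; intros H; simpl. lra.
  assert (0 < p a) by (apply Hp, H; simpl; auto).
  assert (0 <= seq_prob p s) by (apply IHs; intros; apply H; simpl; auto).
  unfold seq_prob in *. simpl. nra.
Qed.

Definition qA (l : nat) (p : nat -> R) (A : nat -> bool) : R := sumR (map (fun j => if A j then p j else 0) (seq 0 l)).

Lemma qA_compl l p A : sumR (map p (seq 0 l)) = 1 -> qA l p (fun j => negb (A j)) = 1 - qA l p A.
Proof.
  intros H. unfold qA. rewrite <- H.
  rewrite (sumR_map_ext_in p (fun j => (if A j then p j else 0) + (if negb (A j) then p j else 0))).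
  rewrite sumR_map_plus. ring. intros. destruct (A x); simpl; ring.
Qed.

Lemma dist l (p : nat -> R) A (hsum : sumR (map p (seq 0 l)) = 1) :
  forall T g, sumR (map (fun s => seq_prob p s * g (cntA A s)) (all_seqs l T)) = Bexp (qA l p A) T g.
Proof.
  intros T. induction T; intros g.
  - simpl. unfold seq_prob. simpl. ring.
  - simpl all_seqs. rewrite sumR_flat_map. simpl Bexp. rewrite <- !IHT.
    rewrite <- !sumR_map_scal, <- sumR_map_plus.
    apply sumR_map_ext_in. intros s _.
    rewrite map_map.
    pose proof (qA_compl l p A hsum) as Hc. unfold qA in Hc |- *.
    rewrite (sumR_map_ext_in _ (fun j => seq_prob p s * g (S (cntA A s)) * (if A j then p j else 0)
         + seq_prob p s * g (cntA A s) * (if negb (A j) then p j else 0))).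
    + rewrite sumR_map_plus, !sumR_map_scal, Hc. ring.
    + intros j _. unfold seq_prob. simpl. destruct (A j); simpl; ring.
Qed.

Lemma count_cntA s j : count_occ Nat.eq_dec s j = cntA (fun i => Nat.eqb i j) s.
Proof.
  induction s as [|a s IHs]; simpl; auto. destruct (Nat.eq_dec a j) as [->|Hn].
  - rewrite Nat.eqb_refl. simpl. auto.
  - apply Nat.eqb_neq in Hn. rewrite Hn. simpl. auto.
Qed.

Lemma emp_eq s j : emp s j = INR (cntA (fun i => Nat.eqb i j) s) / INR (length s).
Proof. unfold emp. rewrite count_cntA. auto. Qed.

Lemma sum_indicator (v : nat -> R) x a n :
  sumR (map (fun j => if Nat.eqb x j then v j else 0) (seq a n)) = if andb (a <=? x)%nat (x <? a + n)%nat then v x else 0.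
Proof.
  revert a. induction n; intros a; simpl.
  - rewrite Nat.add_0_r. destruct (Nat.leb_spec a x), (Nat.ltb_spec x a); simpl; auto; lia.
  - rewrite IHn. destruct (Nat.eqb_spec x a) as [->|Hn].
    + rewrite (proj2 (Nat.leb_le a a)) by lia. rewrite (proj2 (Nat.ltb_lt a (a + S n))) by lia.
      rewrite (proj2 (Nat.leb_gt (S a) a)) by lia. simpl. ring.
    + destruct (Nat.leb_spec (S a) x), (Nat.leb_spec a x), (Nat.ltb_spec x (S a + n)), (Nat.ltb_spec x (a + S n));
        simpl; try ring; lia.
Qed.

Lemma count_sum (A : nat -> bool) (l : nat) (s : list nat) : (forall j, In j s -> (j < l)%nat) ->
  sumR (map (fun j => if A j then INR (cntA (fun i => Nat.eqb i j) s) else 0) (seq 0 l)) = INR (cntA A s).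
Proof.
  induction s as [|x s IH]; intros H.
  - simpl. clear H. induction (seq 0 l) as [|a L IHL]; simpl; auto. rewrite IHL. destruct (A a); ring.
  - simpl cntA. rewrite plus_INR, <- IH by (intros; apply H; simpl; auto).
    rewrite (sumR_map_ext_in _ (fun j => (if Nat.eqb x j then (if A j then 1 else 0) else 0)
           + (if A j then INR (cntA (fun i => Nat.eqb i j) s) else 0))).
    + rewrite sumR_map_plus. rewrite sum_indicator.
      assert (x < l)%nat by (apply H; simpl; auto).
      rewrite (proj2 (Nat.leb_le 0 x)) by lia. rewrite (proj2 (Nat.ltb_lt x (0 + l))) by lia. simpl.
      destruct (A x); simpl; ring.
    + intros j _. destruct (Nat.eqb_spec x j) as [->|Hn]; destruct (A j); rewrite ?plus_INR; simpl; ring.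
Qed.

Lemma fold_max_ge (F : nat -> R) b L j : In j L -> F j <= fold_right (fun j acc => Rmax (F j) acc) b L.
Proof.
  induction L; simpl; intros H. contradiction.
  destruct H as [->|H]. apply Rmax_l. eapply Rle_trans. apply IHL; auto. apply Rmax_r.
Qed.

Lemma fold_max_le (F : nat -> R) b L B : b <= B -> (forall j, In j L -> F j <= B) -> fold_right (fun j acc => Rmax (F j) acc) b L <= B.
Proof.
  intros Hb H. induction L; simpl; auto. apply Rmax_lub. apply H; simpl; auto. apply IHL; intros; apply H; simpl; auto.
Qed.

Lemma maxn_le_sum F l : (1 <= l)%nat -> maxn_R F l <= sumR (map (fun j => Rmax 0 (F j)) (seq 0 l)).
Proof.
  intros Hl. unfold maxn_R.
  assert (Hnn : forall y, In y (seq 0 l) -> 0 <= Rmax 0 (F y)) by (intros; apply Rmax_l).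
  apply fold_max_le.
  - eapply Rle_trans. apply (Rmax_r 0). apply (sumR_nonneg_le (fun j => Rmax 0 (F j))); auto. apply in_seq; lia.
  - intros j Hj. eapply Rle_trans. apply (Rmax_r 0). apply (sumR_nonneg_le (fun j => Rmax 0 (F j))); auto.
Qed.

Lemma maxn_ge F l j : (j < l)%nat -> F j <= maxn_R F l.
Proof. intros. unfold maxn_R. apply fold_max_ge. apply in_seq; lia. Qed.

Definition SA (L : list nat) (A : nat -> bool) (f : nat -> R) := sumR (map (fun j => if A j then f j else 0) L).

Lemma SA_zero L A f : ~ (exists j, In j L /\ A j = true) -> SA L A f = 0.
Proof.
  intros H. induction L as [|a L IHL]; unfold SA in *; simpl; auto.
  destruct (A a) eqn:E. exfalso; apply H; exists a; simpl; auto.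
  rewrite IHL. ring. intros [j [Hj HA]]. apply H. exists j; simpl; auto.
Qed.

Lemma avg L A (w e : nat -> R) r : (exists j, In j L /\ A j = true) -> SA L A e <= r * SA L A w ->
  exists j, In j L /\ A j = true /\ e j <= r * w j.
Proof.
  induction L as [|x L IH]; intros Hex Hle.
  - destruct Hex as [j [[] _]].
  - unfold SA in Hle. simpl in Hle. fold (SA L A e) (SA L A w) in Hle.
    destruct (A x) eqn:Ax.
    + destruct (Rle_dec (e x) (r * w x)) as [h|h].
      * exists x; simpl; auto.
      * destruct (classic (exists j, In j L /\ A j = true)) as [He|He].
        -- destruct (IH He) as [j [Hj1 Hj2]]. lra. exists j; simpl; auto.
        -- rewrite !SA_zero in Hle by auto. lra.
    + destruct Hex as [j [[<-|Hj] HA]]. congruence.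
      destruct (IH (ex_intro _ j (conj Hj HA))) as [i [Hi1 Hi2]]. lra. exists i; simpl; auto.
Qed.

Lemma qA_pos l p A : (forall j, (j < l)%nat -> 0 < p j) -> (exists j, (j < l)%nat /\ A j = true) -> 0 < qA l p A.
Proof.
  intros Hp [j [Hj HA]]. unfold qA.
  eapply Rlt_le_trans with (if A j then p j else 0). rewrite HA. auto.
  apply (sumR_nonneg_le (fun j => if A j then p j else 0)). apply in_seq; lia.
  intros y Hy. apply in_seq in Hy. destruct (A y). left; apply Hp; lia. lra.
Qed.

Lemma sep_lower1 l p A s T : (forall j, (j < l)%nat -> 0 < p j) -> length s = T -> (1 <= T)%nat ->
  (forall j, In j s -> (j < l)%nat) -> (exists j, (j < l)%nat /\ A j = true) ->
  1 - INR (cntA A s) / INR T / qA l p A <= sep_dist l (emp s) p.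
Proof.
  intros Hp Hl HT Hs Hex.
  pose proof (qA_pos l p A Hp Hex) as Hq.
  assert (HTp : 0 < INR T) by (apply lt_0_INR; lia).
  set (r := INR (cntA A s) / INR T / qA l p A).
  assert (E1 : SA (seq 0 l) A (emp s) = INR (cntA A s) / INR T).
  { unfold SA. rewrite (sumR_map_ext_in _ (fun j => / INR T * (if A j then INR (cntA (fun i => Nat.eqb i j) s) else 0))).
    rewrite sumR_map_scal, count_sum by auto. unfold Rdiv; ring.
    intros j _. rewrite emp_eq, Hl. destruct (A j); unfold Rdiv; ring. }
  assert (E2 : SA (seq 0 l) A p = qA l p A) by reflexivity.
  destruct (avg (seq 0 l) A p (emp s) r) as [j [Hj1 [Hj2 Hj3]]].
  { destruct Hex as [j [H1 H2]]. exists j. split; auto. apply in_seq; lia. }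
  { rewrite E1, E2. unfold r. right. field. split; lra. }
  apply in_seq in Hj1. assert (0 < p j) by (apply Hp; lia).
  eapply Rle_trans. 2: apply (maxn_ge (fun j => 1 - emp s j / p j) l j); lia.
  simpl. assert (emp s j / p j <= r).
  { apply (Rmult_le_reg_r (p j)); auto. unfold Rdiv at 1. rewrite Rmult_assoc, Rinv_l, Rmult_1_r by lra. lra. }
  lra.
Qed.

Lemma cntA_compl A s : (cntA A s + cntA (fun j => negb (A j)) s = length s)%nat.
Proof. induction s as [|a s IHs]; simpl; auto. destruct (A a); simpl; lia. Qed.

Lemma sep_lower2 l p A s T : (forall j, (j < l)%nat -> 0 < p j) -> sumR (map p (seq 0 l)) = 1 ->
  length s = T -> (1 <= T)%nat ->
  (forall j, In j s -> (j < l)%nat) -> (exists j, (j < l)%nat /\ A j = true) -> (exists j, (j < l)%nat /\ A j = false) ->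
  let q := qA l p A in let c := INR T * q in
  Rmax 0 (c - INR (cntA A s)) / c + Rmax 0 (INR (cntA A s) - c) / (INR T * (1 - q)) <= sep_dist l (emp s) p.
Proof.
  intros Hp hsum Hl HT Hs Hex1 Hex2 q c.
  pose proof (sep_lower1 l p A s T Hp Hl HT Hs Hex1) as L1.
  assert (Hex2' : exists j, (j < l)%nat /\ negb (A j) = true).
  { destruct Hex2 as [j [H1 H2]]. exists j. rewrite H2. auto. }
  pose proof (sep_lower1 l p (fun j => negb (A j)) s T Hp Hl HT Hs Hex2') as L2.
  rewrite qA_compl in L2 by auto. fold q in L1, L2.
  pose proof (qA_pos l p A Hp Hex1). pose proof (qA_pos l p _ Hp Hex2'). rewrite qA_compl in H0 by auto. fold q in H, H0.
  assert (HTp : 0 < INR T) by (apply lt_0_INR; lia).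
  pose proof (cntA_compl A s) as Hc. rewrite Hl in Hc.
  assert (HX : INR (cntA (fun j => negb (A j)) s) = INR T - INR (cntA A s)) by (rewrite <- Hc, plus_INR; ring).
  rewrite HX in L2. set (X := INR (cntA A s)) in *.
  assert (Hcp : 0 < c) by (unfold c; nra).
  assert (HTq : 0 < INR T * (1 - q)) by nra.
  replace (1 - X / INR T / q) with ((c - X) / c) in L1 by (unfold c; field; split; lra).
  replace (1 - (INR T - X) / INR T / (1 - q)) with ((X - c) / (INR T * (1 - q))) in L2 by (unfold c; field; split; lra).
  destruct (Rle_dec X c).
  - rewrite (Rmax_right 0 (c - X)) by lra. rewrite (Rmax_left 0 (X - c)) by lra.
    unfold Rdiv at 2. rewrite Rmult_0_l, Rplus_0_r. auto.
  - rewrite (Rmax_left 0 (c - X)) by lra. rewrite (Rmax_right 0 (X - c)) by lra.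
    unfold Rdiv at 1. rewrite Rmult_0_l, Rplus_0_l. auto.
Qed.

Lemma sep_upper l p s T : (1 <= l)%nat -> length s = T ->
  sep_dist l (emp s) p <= sumR (map (fun j => Rmax 0 (1 - INR (cntA (fun i => Nat.eqb i j) s) / INR T / p j)) (seq 0 l)).
Proof.
  intros Hl HT. unfold sep_dist. eapply Rle_trans. apply maxn_le_sum; auto.
  right. apply sumR_map_ext_in. intros j _. rewrite emp_eq, HT. auto.
Qed.

Lemma qA_single l (p : nat -> R) j : (j < l)%nat -> qA l p (fun i => Nat.eqb i j) = p j.
Proof.
  intros Hj. unfold qA.
  rewrite (sumR_map_ext_in _ (fun i => if Nat.eqb j i then p i else 0)).
  rewrite sum_indicator. rewrite (proj2 (Nat.leb_le 0 j)) by lia. rewrite (proj2 (Nat.ltb_lt j (0 + l))) by lia. auto.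
  intros i _. rewrite Nat.eqb_sym. auto.
Qed.

Lemma floor_exists x : 0 <= x -> exists m : nat, INR m <= x < INR m + 1.
Proof.
  intros Hx. destruct (base_Int_part x) as [H1 H2].
  set (z := Int_part x) in *.
  assert (Hz : (0 <= z)%Z). { apply le_IZR. assert (-1 < IZR z) by lra. apply lt_IZR in H. simpl. apply IZR_le. lia. }
  exists (Z.to_nat z). rewrite INR_IZR_INZ, Z2Nat.id by auto. lra.
Qed.

Lemma sq_eq x y : 0 <= x -> 0 <= y -> x * x = y * y -> x = y.
Proof. intros. apply Rsqr_inj; auto. Qed.

Lemma rho1_eq q T : 0 < q < 1 -> 0 < T ->
  rho1 q * sqrt (1 / (2 * PI * T)) = (1 - q) * / sqrt (2 * PI * T * q * (1 - q)).
Proof.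
  intros Hq HT. pose proof PI_RGT_0.
  assert (P1 : 0 < 2 * PI * T * q * (1 - q)).
  { replace (2 * PI * T * q * (1 - q)) with ((2 * PI * T) * (q * (1 - q))) by ring. apply Rmult_lt_0_compat; nra. }
  unfold rho1. apply sq_eq.
  - apply Rmult_le_pos; apply sqrt_pos.
  - apply Rmult_le_pos. lra. left; apply Rinv_0_lt_compat, sqrt_lt_R0; auto.
  - replace (sqrt ((1 - q) / q) * sqrt (1 / (2 * PI * T)) * (sqrt ((1 - q) / q) * sqrt (1 / (2 * PI * T))))
      with ((sqrt ((1 - q) / q) * sqrt ((1 - q) / q)) * (sqrt (1 / (2 * PI * T)) * sqrt (1 / (2 * PI * T)))) by ring.
    replace ((1 - q) * / sqrt (2 * PI * T * q * (1 - q)) * ((1 - q) * / sqrt (2 * PI * T * q * (1 - q))))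
      with ((1-q) * (1-q) * / (sqrt (2 * PI * T * q * (1 - q)) * sqrt (2 * PI * T * q * (1 - q)))) by (field; apply Rgt_not_eq, sqrt_lt_R0; auto).
    rewrite !sqrt_sqrt. field. repeat split; lra. lra.
    apply Rdiv_le_0_compat; nra. apply Rdiv_le_0_compat; lra.
Qed.

Lemma rho2_eq q T : 0 < q < 1 -> 0 < T ->
  rho2 q * sqrt (1 / (2 * PI * T)) = / sqrt (2 * PI * T * q * (1 - q)).
Proof.
  intros Hq HT. pose proof PI_RGT_0.
  assert (P1 : 0 < 2 * PI * T * q * (1 - q)).
  { replace (2 * PI * T * q * (1 - q)) with ((2 * PI * T) * (q * (1 - q))) by ring. apply Rmult_lt_0_compat; nra. }
  assert (R2 : rho2 q = / sqrt (q * (1 - q))).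
  { unfold rho2, rho1. replace (1 - (1 - q)) with q by ring.
    apply sq_eq.
    - apply Rplus_le_le_0_compat; apply sqrt_pos.
    - left; apply Rinv_0_lt_compat, sqrt_lt_R0; nra.
    - assert (E1 : sqrt ((1 - q) / q) * sqrt (q / (1 - q)) = 1).
      { rewrite <- sqrt_mult. replace ((1 - q) / q * (q / (1 - q))) with 1 by (field; lra). apply sqrt_1.
        apply Rdiv_le_0_compat; lra. apply Rdiv_le_0_compat; lra. }
      replace ((sqrt ((1 - q) / q) + sqrt (q / (1 - q))) * (sqrt ((1 - q) / q) + sqrt (q / (1 - q))))
        with (sqrt ((1 - q) / q) * sqrt ((1 - q) / q) + sqrt (q / (1 - q)) * sqrt (q / (1 - q)) + 2 * (sqrt ((1 - q) / q) * sqrt (q / (1 - q)))) by ring.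
      rewrite E1. rewrite !sqrt_sqrt.
      replace (/ sqrt (q * (1 - q)) * / sqrt (q * (1 - q))) with (/ (sqrt (q * (1 - q)) * sqrt (q * (1 - q)))) by (field; apply Rgt_not_eq, sqrt_lt_R0; nra).
      rewrite sqrt_sqrt by nra. field. lra. apply Rdiv_le_0_compat; lra. apply Rdiv_le_0_compat; lra. }
  rewrite R2. apply sq_eq.
  - apply Rmult_le_pos. left; apply Rinv_0_lt_compat, sqrt_lt_R0; nra. apply sqrt_pos.
  - left; apply Rinv_0_lt_compat, sqrt_lt_R0; auto.
  - replace (/ sqrt (q * (1 - q)) * sqrt (1 / (2 * PI * T)) * (/ sqrt (q * (1 - q)) * sqrt (1 / (2 * PI * T))))
      with ((sqrt (1 / (2 * PI * T)) * sqrt (1 / (2 * PI * T))) / (sqrt (q * (1 - q)) * sqrt (q * (1 - q)))) by (field; apply Rgt_not_eq, sqrt_lt_R0; nra).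
    replace (/ sqrt (2 * PI * T * q * (1 - q)) * / sqrt (2 * PI * T * q * (1 - q)))
      with (/ (sqrt (2 * PI * T * q * (1 - q)) * sqrt (2 * PI * T * q * (1 - q)))) by (field; apply Rgt_not_eq, sqrt_lt_R0; auto).
    rewrite !sqrt_sqrt. field. repeat split; lra. lra. nra. apply Rdiv_le_0_compat; nra.
Qed.

Definition KP (q K : R) := forall T m, (1 <= T)%nat -> INR m <= INR T * q < INR m + 1 ->
  Rabs (binF (T-1) m q - / sqrt (2 * PI * INR T * q * (1-q))) <= K / INR T.

Lemma KP_mono q K K' : K <= K' -> KP q K -> KP q K'.
Proof.
  intros HK H T m HT Hm. eapply Rle_trans. apply H; auto.
  assert (0 < INR T) by (apply lt_0_INR; lia). unfold Rdiv. apply Rmult_le_compat_r; auto. left; apply Rinv_0_lt_compat; auto.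
Qed.

Lemma finite_choice (p : nat -> R) n : (forall j, (j < n)%nat -> 0 < p j < 1) ->
  exists K, 0 <= K /\ forall j, (j < n)%nat -> KP (p j) K.
Proof.
  induction n; intros H.
  - exists 0. split. lra. intros; lia.
  - destruct IHn as [K1 [HK1 H1]]. intros; apply H; lia.
    destruct (key (p n) (H n ltac:(lia))) as [K2 [HK2 H2]].
    exists (K1 + K2). split. lra. intros j Hj.
    destruct (Nat.eq_dec j n) as [->|Hn].
    + apply (KP_mono _ K2). lra. exact H2.
    + apply (KP_mono _ K1). lra. apply H1. lia.
Qed.

Lemma upper_j l (p : nat -> R) (hp : forall j, (j < l)%nat -> 0 < p j < 1)
  (hsum : sumR (map p (seq 0 l)) = 1) j K (Hj : (j < l)%nat) (HK : KP (p j) K) T (HT : (1 <= T)%nat) :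
  sumR (map (fun s => seq_prob p s * Rmax 0 (1 - INR (cntA (fun i => Nat.eqb i j) s) / INR T / p j)) (all_seqs l T))
  <= rho1 (p j) * sqrt (1 / (2 * PI * INR T)) + K / INR T.
Proof.
  pose proof (dist l p (fun i => Nat.eqb i j) hsum T (fun k => Rmax 0 (1 - INR k / INR T / p j))) as E.
  cbv beta in E. rewrite E, qA_single by auto.
  pose proof (hp j Hj) as Hq.
  assert (HTp : 0 < INR T) by (apply lt_0_INR; lia).
  destruct (floor_exists (INR T * p j)) as [m [Hm1 Hm2]]. nra.
  destruct T as [|N]. lia.
  rewrite (Bexp_upper_val (p j) Hq N m Hm1 Hm2).
  pose proof (HK (S N) m HT (conj Hm1 Hm2)) as B0. replace (S N - 1)%nat with N in B0 by lia.
  assert (0 <= K / INR (S N)) by (eapply Rle_trans; [apply Rabs_pos | exact B0]).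
  pose proof (Rabs_le_inv _ _ B0) as B.
  rewrite rho1_eq by auto.
  nra.
Qed.

Lemma lower_mask l (p : nat -> R) (hp : forall j, (j < l)%nat -> 0 < p j < 1)
  (hsum : sumR (map p (seq 0 l)) = 1) (A : nat -> bool)
  (H1 : exists j, (j < l)%nat /\ A j = true) (H2 : exists j, (j < l)%nat /\ A j = false) :
  exists K, 0 <= K /\ forall T, (1 <= T)%nat -> rho2 (qA l p A) * sqrt (1 / (2 * PI * INR T)) - K / INR T <= exp_sep l p T.
Proof.
  assert (hp' : forall j, (j < l)%nat -> 0 < p j) by (intros; apply hp; auto).
  set (q := qA l p A).
  assert (Hq : 0 < q < 1).
  { split. apply qA_pos; auto.
    assert (Hex2' : exists j, (j < l)%nat /\ negb (A j) = true).
    { destruct H2 as [j [Hj1 Hj2]]. exists j. rewrite Hj2. auto. }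
    pose proof (qA_pos l p _ hp' Hex2'). rewrite qA_compl in H by auto. fold q in H. lra. }
  destruct (key q Hq) as [K [HK HKP]].
  exists K. split; auto. intros T HT.
  assert (HTp : 0 < INR T) by (apply lt_0_INR; lia).
  set (c := INR T * q).
  set (h := fun k => Rmax 0 (c - INR k) / c + Rmax 0 (INR k - c) / (INR T * (1 - q))).
  assert (L : sumR (map (fun s => seq_prob p s * h (cntA A s)) (all_seqs l T)) <= exp_sep l p T).
  { unfold exp_sep. apply sumR_map_le. intros s Hs. destruct (all_seqs_in l T s Hs) as [Hl Hin].
    apply Rmult_le_compat_l. apply (seq_prob_nonneg l); auto.
    unfold h, c, q. apply sep_lower2; auto. }
  pose proof (dist l p A hsum T h) as E. cbv beta in E. rewrite E in L. fold q in L.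
  destruct (floor_exists (INR T * q)) as [m [Hm1 Hm2]]. nra.
  destruct T as [|N]. lia.
  pose proof (Bexp_lower_val q Hq N m Hm1 Hm2) as V.
  unfold h, c in L. rewrite V in L.
  pose proof (HKP (S N) m HT (conj Hm1 Hm2)) as B. replace (S N - 1)%nat with N in B by lia.
  apply Rabs_le_inv in B.
  rewrite rho2_eq by auto. lra.
Qed.

Lemma exp_sep_nonneg l (p : nat -> R) (hp : forall j, (j < l)%nat -> 0 < p j < 1)
  (hsum : sumR (map p (seq 0 l)) = 1) T : (1 <= T)%nat -> 0 <= exp_sep l p T.
Proof.
  intros HT. assert (hp' : forall j, (j < l)%nat -> 0 < p j) by (intros; apply hp; auto).
  assert (Hl : (1 <= l)%nat). { destruct l. simpl in hsum. lra. lia. }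
  unfold exp_sep. rewrite <- (Rmult_0_l 0).
  replace (0 * 0) with (sumR (map (fun s : list nat => 0) (all_seqs l T))).
  2:{ induction (all_seqs l T) as [|x L IHL]; simpl; auto. ring. rewrite IHL. ring. }
  apply sumR_map_le. intros s Hs. destruct (all_seqs_in l T s Hs) as [Hls Hin].
  apply Rmult_le_pos. apply (seq_prob_nonneg l); auto.
  pose proof (sep_lower1 l p (fun _ => true) s T hp' Hls HT Hin ltac:(exists 0%nat; split; auto)) as L.
  assert (E1 : qA l p (fun _ => true) = 1) by (unfold qA; rewrite <- hsum; reflexivity).
  assert (E2 : cntA (fun _ => true) s = T).
  { rewrite <- Hls. clear. induction s; simpl; auto. }
  rewrite E1, E2 in L. assert (0 < INR T) by (apply lt_0_INR; lia).
  replace (1 - INR T / INR T / 1) with 0 in L by (field; lra). auto.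
Qed.

Lemma all_masks_len n b : In b (all_masks n) -> length b = n.
Proof.
  revert b. induction n; intros b Hb; simpl in Hb.
  - destruct Hb as [<-|[]]. auto.
  - apply in_flat_map in Hb. destruct Hb as [b' [Hb' Hin]]. simpl in Hin.
    destruct Hin as [<-|[<-|[]]]; simpl; rewrite IHn; auto.
Qed.

Lemma mask_true b : (1 <= count_occ Bool.bool_dec b true)%nat -> exists j, (j < length b)%nat /\ nth j b false = true.
Proof.
  induction b as [|x b IH]; simpl; intros H. lia.
  destruct (Bool.bool_dec x true) as [->|Hn].
  - exists 0%nat. split; [lia|auto].
  - destruct (IH H) as [j [Hj1 Hj2]]. exists (S j). split; [lia|auto].
Qed.

Lemma mask_false b : (count_occ Bool.bool_dec b true < length b)%nat -> exists j, (j < length b)%nat /\ nth j b false = false.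
Proof.
  induction b as [|x b IH]; simpl; intros H. lia.
  destruct (Bool.bool_dec x true) as [->|Hn].
  - destruct (IH ltac:(lia)) as [j [Hj1 Hj2]]. exists (S j). split; [lia|auto].
  - exists 0%nat. split; [lia|]. destruct x; auto. congruence.
Qed.

Lemma fold_lower (E : nat -> R) (F : list bool -> R) (LB : list (list bool)) :
  (forall T, (1 <= T)%nat -> 0 <= E T) ->
  (forall b, In b LB -> exists K, 0 <= K /\ forall T, (1 <= T)%nat -> F b * sqrt (1 / (2 * PI * INR T)) - K / INR T <= E T) ->
  exists K, 0 <= K /\ forall T, (1 <= T)%nat ->
    fold_right (fun b acc => Rmax (F b) acc) 0 LB * sqrt (1 / (2 * PI * INR T)) - K / INR T <= E T.
Proof.
  intros H0 H. induction LB as [|b LB IH].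
  - exists 0. split. lra. intros T HT. simpl. specialize (H0 T HT).
    assert (0 < INR T) by (apply lt_0_INR; lia). unfold Rdiv. rewrite Rmult_0_l. lra.
  - destruct IH as [K1 [HK1 H1]]. intros; apply H; simpl; auto.
    destruct (H b ltac:(simpl; auto)) as [K2 [HK2 H2]].
    exists (K1 + K2). split. lra. intros T HT. simpl.
    specialize (H1 T HT). specialize (H2 T HT).
    assert (0 < INR T) by (apply lt_0_INR; lia).
    assert (0 <= K1 / INR T) by (apply Rdiv_le_0_compat; lra).
    assert (0 <= K2 / INR T) by (apply Rdiv_le_0_compat; lra).
    replace ((K1 + K2) / INR T) with (K1 / INR T + K2 / INR T) by (field; lra).
    assert (0 <= sqrt (1 / (2 * PI * INR T))) by apply sqrt_pos.
    set (acc := fold_right (fun b acc => Rmax (F b) acc) 0 LB) in *.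
    destruct (Rle_dec (F b) acc); [rewrite Rmax_right by auto | rewrite Rmax_left by lra]; lra.
Qed.

Lemma sumR_const (L : list nat) c : sumR (map (fun _ => c) L) = INR (length L) * c.
Proof. induction L; simpl length; rewrite ?S_INR; simpl. ring. rewrite IHL. ring. Qed.

Theorem mainTheorem2 (l : nat) (p : nat -> R)
  (hp : forall j, (j < l)%nat -> 0 < p j < 1)
  (hsum : sumR (map p (seq 0 l)) = 1) :
  exists C Ct : R, 0 <= C /\ 0 <= Ct /\
    forall T : nat, (1 <= T)%nat ->
      ct_s l p * sqrt (1 / (2 * PI * INR T)) - Ct / INR T <= exp_sep l p T /\
      exp_sep l p T <= c_s l p * sqrt (1 / (2 * PI * INR T)) + C / INR T.
Proof.
  assert (hp' : forall j, (j < l)%nat -> 0 < p j) by (intros; apply hp; auto).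
  assert (Hl : (1 <= l)%nat). { destruct l. simpl in hsum. lra. lia. }
  destruct (finite_choice p l hp) as [K [HK HKP]].
  destruct (fold_lower (exp_sep l p) (fun b => rho2 (p_S l p b))
     (filter (fun b => andb (Nat.leb 1 (mask_card b)) (Nat.ltb (mask_card b) l)) (all_masks l))) as [Ct [HCt HCt']].
  { apply exp_sep_nonneg; auto. }
  { intros b Hb. apply filter_In in Hb. destruct Hb as [Hb1 Hb2].
    apply Bool.andb_true_iff in Hb2. destruct Hb2 as [Hc1 Hc2]. apply Nat.leb_le in Hc1. apply Nat.ltb_lt in Hc2.
    pose proof (all_masks_len l b Hb1) as Hlen. unfold mask_card in *.
    apply (lower_mask l p hp hsum (fun j => nth j b false)).
    - destruct (mask_true b Hc1) as [j [Hj1 Hj2]]. exists j. split; [lia|auto].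
    - destruct (mask_false b ltac:(lia)) as [j [Hj1 Hj2]]. exists j. split; [lia|auto]. }
  exists (INR l * K), Ct. split. apply Rmult_le_pos; auto. apply pos_INR. split; auto.
  intros T HT. split. apply HCt'; auto.
  assert (HTp : 0 < INR T) by (apply lt_0_INR; lia).
  unfold exp_sep.
  eapply Rle_trans.
  { apply sumR_map_le. intros s Hs. destruct (all_seqs_in l T s Hs) as [Hls Hin].
    apply Rmult_le_compat_l. apply (seq_prob_nonneg l); auto. apply (sep_upper l p s T Hl Hls). }
  rewrite (sumR_map_ext_in _ (fun s => sumR (map (fun j => seq_prob p s * Rmax 0 (1 - INR (cntA (fun i => Nat.eqb i j) s) / INR T / p j)) (seq 0 l)))).
  2:{ intros s _. rewrite <- sumR_map_scal. auto. }
  rewrite (sumR_swap (fun s j => seq_prob p s * Rmax 0 (1 - INR (cntA (fun i => Nat.eqb i j) s) / INR T / p j))).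
  eapply Rle_trans.
  { apply sumR_map_le. intros j Hj. apply in_seq in Hj. apply (upper_j l p hp hsum j K ltac:(lia) (HKP j ltac:(lia)) T HT). }
  rewrite sumR_map_plus. unfold c_s.
  rewrite (sumR_map_ext_in (fun j => rho1 (p j) * sqrt (1 / (2 * PI * INR T))) (fun j => sqrt (1 / (2 * PI * INR T)) * rho1 (p j))).
  2:{ intros; ring. }
  rewrite sumR_map_scal, sumR_const, length_seq. right. unfold Rdiv. ring.
Qed.
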